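(* Let $\mathcal{D}=(\Omega,\mathcal{B})$ be a supersimple $2$-$(n,4,\lambda)$ design satisfying property $(\triangle)$, such that $(\Omega,\mathcal{C})$ is a regular two-graph, where $\mathcal{C}$ is the set of collinear triples of $\mathcal{D}$. Let $\infty\in\Omega$, $G:=\mathcal{L}_\infty(\mathcal{D})$, and $\mathcal{E}:=\{[a,b]\mid a,b\in\Omega\}$. Then $G$ is a subgroup of $\operatorname{Aut}(\mathcal{D})$, and $(G,\mathcal{E})$ is a $3$-transposition group.
   Context: A $2$-$(n,4,\lambda)$ design $(\Omega,\mathcal{B})$: $n$ points, a multiset of $4$-subsets (lines), every $2$-subset in exactly $\lambda$ lines; supersimple: distinct lines meet in at most two points. For distinct $a,b$ with lines $\{a,b,a_i,b_i\}$ ($1\le i\le\lambda$) through them, the elementary move is $[a,b]:=(a,b)\prod_i(a_i,b_i)$; $[a,a]:=1$. Permutations act on the right, products composed left to right; $[a_0,\dots,a_k]:=[a_0,a_1]\cdots[a_{k-1},a_k]$; $\mathcal{L}_\infty(\mathcal{D})$ is the set of all move sequences $[\infty,a_1,\dots,a_k]$, $k\ge1$. Property $(\triangle)$: if $B_1,B_2\in\mathcal{B}$ with $|B_1\cap B_2|=2$ then $B_1\triangle B_2\in\mathcal{B}$. Collinear triple: $3$-subset contained in a line. Regular two-graph: $(\Omega,\mathcal{C})$ is a $2$-$(n,3,\mu)$ design with every $4$-subset containing $0$, $2$ or $4$ members of $\mathcal{C}$. A $3$-transposition group is a pair $(G,\mathcal{E})$, $\mathcal{E}$ a set of involutions with $G=\langle\mathcal{E}\rangle$,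 $\mathcal{E}$ a union of $G$-conjugacy classes, and $gh$ of order $1,2$ or $3$ for all $g,h\in\mathcal{E}$. *)

(* Defs.v *)
From mathcomp Require Import all_boot all_fingroup.
Set Implicit Arguments. Unset Strict Implicit. Unset Printing Implicit Defensive.

Section Designs.
Variable T : finType.
Implicit Types (B : seq {set T}) (L : {set T}) (a b x y : T).

(* A 2-(n,4,lambda) design with n = #|T| : the (multi)set of lines B is a
   sequence of 4-subsets; every 2-subset {x,y} lies in exactly lambda lines
   (counted with multiplicity). *)
Definition is_2design_4 B (lam : nat) : Prop :=
  (forall L, L \in B -> #|L| = 4) /\
  (forall x y, x != y -> count (fun L : {set T} => (x \in L) && (y \in L)) B = lam).

(* supersimple: distinct lines (distinct entries of the multiset) meet in
   at most two points *)
Definition supersimple B : Prop :=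
  forall i j, i < size B -> j < size B -> i != j ->
    #|nth set0 B i :&: nth set0 B j| <= 2.

Definition prop_triangle B : Prop :=
  forall B1 B2 : {set T}, B1 \in B -> B2 \in B -> #|B1 :&: B2| = 2 ->
    ((B1 :\: B2) :|: (B2 :\: B1)) \in B.

Definition collinear_triples B : {set {set T}} :=
  [set S : {set T} | (#|S| == 3) && has (fun L : {set T} => S \subset L) B].

Definition regular_two_graph (C : {set {set T}}) : Prop :=
  (forall S, S \in C -> #|S| = 3) /\
  (exists mu : nat, forall x y, x != y ->
      #|[set S in C | (x \in S) && (y \in S)]| = mu) /\
  (forall F : {set T}, #|F| = 4 ->
      #|[set S in C | S \subset F]| \in [:: 0; 2; 4]).

Local Open Scope group_scope.

Definition other1 L a b : T := nth a (enum (L :\: [set a; b])) 0.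
Definition other2 L a b : T := nth a (enum (L :\: [set a; b])) 1.

(* elementary move [a,b] = (a,b) prod_i (a_i,b_i); [a,a] = 1.
   Permutations act on the right; s * t means "first s, then t". *)
Definition move B a b : {perm T} :=
  if a == b then 1 else
  tperm a b * \prod_(L <- B | (a \in L) && (b \in L)) tperm (other1 L a b) (other2 L a b).

Fixpoint move_path B a (s : seq T) : {perm T} :=
  match s with
  | [::] => 1
  | c :: s' => move B a c * move_path B c s'
  end.

Definition in_Linf B (inf : T) (g : {perm T}) : Prop :=
  exists s : seq T, s != [::] /\ g = move_path B inf s.

Definition is_aut B (g : {perm T}) : Prop :=
  perm_eq [seq g @: L | L <- B] B.

Definition moves_set B : {set {perm T}} :=
  [set move B ab.1 ab.2 | ab in [set ab : T * T | ab.1 != ab.2]].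

End Designs.

Definition three_transposition_group (gT : finGroupType)
    (G : {group gT}) (E : {set gT}) : Prop :=
  (forall e, e \in E -> #[e]%g = 2) /\
  (<<E>>%g = G :> {set gT}) /\
  (forall e g, e \in E -> g \in G -> (e ^ g)%g \in E) /\
  (forall e f, e \in E -> f \in E -> #[(e * f)%g]%g \in [:: 1; 2; 3]).

(* Main.v *)
Require Import Defs.
From mathcomp Require Import all_boot all_fingroup.
From mathcomp Require Import all_solvable.
Set Implicit Arguments. Unset Strict Implicit. Unset Printing Implicit Defensive.

Section Basics.
Variable T : finType.
Variable B : seq {set T}.
Hypothesis B4 : forall L, L \in B -> #|L| = 4.
Hypothesis Bss : supersimple B.
Hypothesis Btri : prop_triangle B.
Hypothesis Hrtg : regular_two_graph (collinear_triples B).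

Lemma Buniq : uniq B.
Proof.
apply/negPn/negP => /(uniqPn set0) [i [j [ij jB Eij]]].
have iB : i < size B by apply: ltn_trans jB.
have := Bss iB jB (negbT (ltn_eqF ij)); rewrite Eij setIid B4 //.
exact: mem_nth.
Qed.

Lemma meet2 K L : K \in B -> L \in B -> K != L -> #|K :&: L| <= 2.
Proof.
move=> KB LB KL.
have iK : index K B < size B by rewrite index_mem.
have iL : index L B < size B by rewrite index_mem.
have := Bss iK iL; rewrite !nth_index //; apply.
by apply: contra KL => /eqP /(congr1 (nth set0 B)); rewrite !nth_index // => ->.
Qed.

Lemma card3 (p q r : T) : p != q -> p != r -> q != r -> #|[set p; q; r]| = 3.
Proof.
by move=> pq pr qr; rewrite -setUA !cardsU1 cards1 !inE (negPf pq) (negPf pr) (negPf qr).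
Qed.

Lemma card3le (p q r : T) : #|[set p; q; r]| <= 3.
Proof.
rewrite -setUA !cardsU1 cards1.
by case: (p \notin _); case: (q \notin _).
Qed.

Lemma line3 K L p q r : K \in B -> L \in B -> p != q -> p != r -> q != r ->
  p \in K -> q \in K -> r \in K -> p \in L -> q \in L -> r \in L -> K = L.
Proof.
move=> KB LB pq pr qr pK qK rK pL qL rL.
apply/eqP; apply/negPn/negP => KL.
have := meet2 KB LB KL.
have sub : [set p; q; r] \subset K :&: L.
  by apply/subsetP => t; rewrite !inE => /orP [/orP [] | ] /eqP ->; rewrite ?pK ?qK ?rK ?pL ?qL ?rL.
have := subset_leq_card sub.
rewrite card3 // => h1 h2; have := leq_trans h1 h2; by [].
Qed.

Lemma avoid3 K p q r : K \in B -> exists2 w, w \in K & [&& w != p, w != q & w != r].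
Proof.
move=> KB; case: (boolP [exists w in K, [&& w != p, w != q & w != r]]) => [/exists_inP [w ? ?]|/exists_inPn H]; first by exists w.
have sub : K \subset [set p; q; r].
  apply/subsetP => t tK; have := H t tK; rewrite !inE.
  by case: (t == p); case: (t == q); case: (t == r).
have := leq_trans (subset_leq_card sub) (card3le p q r); rewrite B4 //.
Qed.

Lemma rest1 K p q r : K \in B -> p != q -> p != r -> q != r ->
  p \in K -> q \in K -> r \in K -> exists z, K :\ p :\ q :\ r = [set z].
Proof.
move=> KB pq pr qr pK qK rK.
apply/cards1P.
have := B4 KB; rewrite (cardsD1 p) pK (cardsD1 q) !inE eq_sym pq qK.
rewrite (cardsD1 r) !inE eq_sym qr eq_sym pr rK /=.
by rewrite !add1n => -[] ->.
Qed.

Lemma fourth_uniq K p q r w1 w2 : K \in B -> p != q -> p != r -> q != r ->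
  p \in K -> q \in K -> r \in K ->
  w1 \in K -> w1 != p -> w1 != q -> w1 != r ->
  w2 \in K -> w2 != p -> w2 != q -> w2 != r -> w1 = w2.
Proof.
move=> KB pq pr qr pK qK rK w1K w1p w1q w1r w2K w2p w2q w2r.
have [z Ez] := rest1 KB pq pr qr pK qK rK.
have : w1 \in K :\ p :\ q :\ r by rewrite !inE w1K w1p w1q w1r.
have : w2 \in K :\ p :\ q :\ r by rewrite !inE w2K w2p w2q w2r.
by rewrite Ez !inE => /eqP -> /eqP ->.
Qed.

Lemma tri_step K L u v w : K \in B -> L \in B -> u != v ->
  u \in K -> v \in K -> u \in L -> v \in L -> w \in K -> w \notin L ->
  (K :\: L) :|: (L :\: K) \in B.
Proof.
move=> KB LB uv uK vK uL vL wK wL.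
have KL : K != L by apply: contraNneq wL => <-.
apply: Btri => //.
apply/eqP; rewrite eqn_leq meet2 //=.
have sub : [set u; v] \subset K :&: L.
  by apply/subsetP => t; rewrite !inE => /orP [] /eqP ->; rewrite ?uK ?vK ?uL ?vL.
by have := subset_leq_card sub; rewrite cards2 uv.
Qed.

Lemma sub_line (X J : {set T}) : J \in B -> #|X| = 4 -> X \subset J -> X \in B.
Proof.
move=> JB X4 XJ.
have -> : X = J by apply/eqP; rewrite eqEcard XJ B4 // X4.
done.
Qed.


Local Open Scope group_scope.

Lemma others L a b : L \in B -> a != b -> a \in L -> b \in L ->
  [/\ other1 L a b \in L, other2 L a b \in L, other1 L a b != other2 L a b,
      [&& other1 L a b != a, other1 L a b != b, other2 L a b != a & other2 L a b != b] &
      forall t, t \in L -> t != a -> t != b -> t = other1 L a b \/ t = other2 L a b].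
Proof.
move=> LB ab aL bL.
have S2 : #|L :\: [set a; b]| = 2.
  have := B4 LB; rewrite (cardsD1 a) aL (cardsD1 b) !inE eq_sym ab bL /=.
  by rewrite setDDl => -[].
rewrite /other1 /other2.
have := enum_uniq (mem (L :\: [set a; b])).
have := mem_enum (mem (L :\: [set a; b])).
move: S2; rewrite cardE.
case: (enum _) => [|x [|y [|z s]]] //= _ Hm.
rewrite !inE andbT => xy.
have := Hm x; have := Hm y; rewrite !inE !eqxx orbT /= => /esym /andP [/norP [ya yb] yL] /esym /andP [/norP [xa xb] xL].
split => //; first by rewrite xa xb ya yb.
move=> t tL ta tb; have := Hm t; rewrite !inE (negPf ta) (negPf tb) tL /=.
by move=> /orP [] /eqP ->; [left|right].
Qed.

Definition col (a b z : T) := has (fun L : {set T} => [&& a \in L, b \in L & z \in L]) B.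

Definition Pr (a b : T) : {perm T} := \prod_(L <- B | (a \in L) && (b \in L)) tperm (other1 L a b) (other2 L a b).

Lemma prod_fix (a b : T) (s : seq {set T}) (z : T) : a != b -> {subset s <= B} ->
  (forall L, L \in s -> a \in L -> b \in L -> z \in L -> z = a \/ z = b) ->
  (\prod_(L <- s | (a \in L) && (b \in L)) tperm (other1 L a b) (other2 L a b)) z = z.
Proof.
move=> ab; elim: s => [|K s IH] sB H; first by rewrite big_nil perm1.
rewrite big_cons.
have sB' : {subset s <= B} by move=> L Ls; apply: sB; rewrite inE Ls orbT.
have H' : forall L, L \in s -> a \in L -> b \in L -> z \in L -> z = a \/ z = b.
  by move=> L Ls; apply: H; rewrite inE Ls orbT.
case: ifP => [/andP [aK bK] | _]; last exact: IH.
rewrite permM; rewrite -[RHS](IH sB' H'); congr (_ _).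
have KB : K \in B by apply: sB; rewrite inE eqxx.
have [o1K o2K o12 /and4P [o1a o1b o2a o2b] _] := others KB ab aK bK.
rewrite permE /=.
case: (boolP (z \in K)) => zK.
  have [] := H K (mem_head _ _) aK bK zK => ->.
    by rewrite eq_sym (negPf o1a) eq_sym (negPf o2a).
  by rewrite eq_sym (negPf o1b) eq_sym (negPf o2b).
have -> : (z == other1 K a b) = false by apply: contraNF zK => /eqP ->.
by have -> : (z == other2 K a b) = false by apply: contraNF zK => /eqP ->.
Qed.


Lemma tperm_other L (a b z : T) : L \in B -> a != b -> a \in L -> b \in L ->
  z \in L -> z != a -> z != b ->
  let w := tperm (other1 L a b) (other2 L a b) z in
  [/\ w \in L, w != a, w != b & w != z].
Proof.
move=> LB ab aL bL zL za zb /=.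
have [o1L o2L o12 /and4P [o1a o1b o2a o2b] H] := others LB ab aL bL.
case: (H z zL za zb) => ->; [rewrite tpermL | rewrite tpermR]; split => //.
by rewrite eq_sym.
Qed.

Lemma prod_line (a b : T) (s : seq {set T}) L (z : T) : a != b -> uniq s -> {subset s <= B} ->
  L \in s -> a \in L -> b \in L -> z \in L -> z != a -> z != b ->
  (\prod_(K <- s | (a \in K) && (b \in K)) tperm (other1 K a b) (other2 K a b)) z
    = tperm (other1 L a b) (other2 L a b) z.
Proof.
move=> ab; elim: s => [|K s IH] //= /andP [Ks us] sB Ls aL bL zL za zb.
have sB' : {subset s <= B} by move=> L' Ls'; apply: sB; rewrite inE Ls' orbT.
have KB : K \in B by apply: sB; rewrite inE eqxx.
have LB : L \in B by apply: sB.
rewrite big_cons.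
case: (eqVneq L K) => [LKe | LK].
  rewrite -LKe aL bL /= permM.
  have [wL wa wb wz] := tperm_other LB ab aL bL zL za zb.
  apply: prod_fix => // L' L's aL' bL' wL'.
  have L'B : L' \in B by apply: sB'.
  have aw : a != tperm (other1 L a b) (other2 L a b) z by rewrite eq_sym.
  have bw : b != tperm (other1 L a b) (other2 L a b) z by rewrite eq_sym.
  have E := line3 LB L'B ab (aw) (bw) aL bL wL aL' bL' wL'.
  by move: Ks; rewrite -LKe E L's.
have Ls' : L \in s by move: Ls; rewrite inE (negPf LK).
case: ifP => [/andP [aK bK] | _]; last exact: IH.
rewrite permM -(IH us sB' Ls' aL bL zL za zb); congr (_ _).
have zK : z \notin K.
  apply/negP => zK.
  have az : a != z by rewrite eq_sym.
  have bz : b != z by rewrite eq_sym.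
  have E := line3 LB KB ab (az) (bz) aL bL zL aK bK zK.
  by move: LK; rewrite E eqxx.
have [o1K o2K _ _ _] := others KB ab aK bK.
rewrite permE /=.
have -> : (z == other1 K a b) = false by apply: contraNF zK => /eqP ->.
by have -> : (z == other2 K a b) = false by apply: contraNF zK => /eqP ->.
Qed.


Lemma move_a (a b : T) : a != b -> move B a b a = b.
Proof.
move=> ab; rewrite /move (negPf ab) permM tpermL.
by apply: prod_fix => // L _ _ _ _; right.
Qed.

Lemma move_b (a b : T) : a != b -> move B a b b = a.
Proof.
move=> ab; rewrite /move (negPf ab) permM tpermR.
by apply: prod_fix => // L _ _ _ _; left.
Qed.

Lemma move_line (a b z : T) L : a != b -> L \in B -> a \in L -> b \in L -> z \in L ->
  z != a -> z != b ->
  [/\ move B a b z \in L, move B a b z != a, move B a b z != b & move B a b z != z].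
Proof.
move=> ab LB aL bL zL za zb.
have az : a != z by rewrite eq_sym.
have bz : b != z by rewrite eq_sym.
rewrite /move (negPf ab) permM (tpermD az bz).
rewrite (prod_line ab Buniq (fun L h => h) LB aL bL zL za zb).
by have [] := tperm_other LB ab aL bL zL za zb.
Qed.

Lemma move_fix (a b z : T) : z != a -> z != b -> ~~ col a b z -> move B a b z = z.
Proof.
move=> za zb nc.
case: (eqVneq a b) => [<- | ab]; first by rewrite /move eqxx perm1.
have az : a != z by rewrite eq_sym.
have bz : b != z by rewrite eq_sym.
rewrite /move (negPf ab) permM (tpermD az bz).
apply: prod_fix => // L LB aL bL zL.
by move: nc; rewrite /col; move/hasPn => /(_ L LB); rewrite aL bL zL.
Qed.

Lemma move_eq_line (a b z t : T) L : a != b -> L \in B -> a \in L -> b \in L -> z \in L ->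
  z != a -> z != b -> t \in L -> t != a -> t != b -> t != z -> move B a b z = t.
Proof.
move=> ab LB aL bL zL za zb tL ta tb tz.
have [wL wa wb wz] := move_line ab LB aL bL zL za zb.
apply: (fourth_uniq LB ab _ _ aL bL zL) => //; by rewrite eq_sym.
Qed.

Lemma colP (a b z : T) : reflect (exists2 L, L \in B & [&& a \in L, b \in L & z \in L]) (col a b z).
Proof. exact: hasP. Qed.

Lemma moveC (a b : T) : move B a b = move B b a.
Proof.
case: (eqVneq a b) => [-> // | ab].
apply/permP => z.
case: (eqVneq z a) => [-> | za]; first by rewrite move_a // move_b // eq_sym.
case: (eqVneq z b) => [-> | zb]; first by rewrite move_b // move_a // eq_sym.
case: (boolP (col a b z)) => [/colP [L LB /and3P [aL bL zL]] | nc].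
  have [wL wa wb wz] := move_line ab LB aL bL zL za zb.
  symmetry; apply: (move_eq_line (L := L)) => //; by rewrite eq_sym.
rewrite !move_fix //.
by apply: contra nc => /colP [L LB /and3P [bL aL zL]]; apply/colP; exists L => //; rewrite aL bL zL.
Qed.

Lemma move_invol (a b z : T) : move B a b (move B a b z) = z.
Proof.
case: (eqVneq a b) => [-> | ab]; first by rewrite /move eqxx !perm1.
case: (eqVneq z a) => [-> | za]; first by rewrite move_a // move_b.
case: (eqVneq z b) => [-> | zb]; first by rewrite move_b // move_a.
case: (boolP (col a b z)) => [/colP [L LB /and3P [aL bL zL]] | nc]; last by rewrite !move_fix.
have [wL wa wb wz] := move_line ab LB aL bL zL za zb.
apply: (move_eq_line (L := L)) => //; by rewrite eq_sym.
Qed.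

Lemma move_sq (a b : T) : move B a b * move B a b = 1.
Proof. by apply/permP => z; rewrite permM move_invol perm1. Qed.


Lemma moved_col (a b z : T) : move B a b z != z -> z != a -> z != b -> col a b z.
Proof. by move=> h za zb; apply: contraR h => nc; rewrite move_fix. Qed.

Lemma move_line_half (a b c d z : T) L : L \in B ->
  a != b -> a != c -> a != d -> b != c -> b != d -> c != d ->
  a \in L -> b \in L -> c \in L -> d \in L -> z \notin L -> col a b z ->
  move B c d z = move B a b z.
Proof.
move=> LB ab ac ad bc bd cd aL bL cL dL zL /colP [M MB /and3P [aM bM zM]].
have za : z != a by apply: contraNneq zL => ->.
have zb : z != b by apply: contraNneq zL => ->.
have [wM wa wb wz] := move_line ab MB aM bM zM za zb.
set w := move B a b z in wM wa wb wz *.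
have cM : c \notin M.
  apply/negP => cM; have E := line3 LB MB ab ac bc aL bL cL aM bM cM.
  by move: zL; rewrite E zM.
have wL : w \notin L.
  apply/negP => wL.
  have aw : a != w by rewrite eq_sym.
  have bw : b != w by rewrite eq_sym.
  have E := line3 LB MB ab aw bw aL bL wL aM bM wM.
  by move: zL; rewrite E zM.
have dM : d \notin M.
  apply/negP => dM; have E := line3 LB MB ab ad bd aL bL dL aM bM dM.
  by move: zL; rewrite E zM.
have JB := tri_step LB MB ab aL bL aM bM cL cM.
apply: (move_eq_line (L := (L :\: M) :|: (M :\: L))) => //; rewrite ?inE ?cL ?cM ?dL ?dM ?zL ?zM ?wL ?wM //.
- by apply: contraNneq zL => ->.
- by apply: contraNneq zL => ->.
- by apply: contraNneq wL => ->.
- by apply: contraNneq wL => ->.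
Qed.

Lemma move_line_eq (a b c d : T) L : L \in B ->
  a != b -> a != c -> a != d -> b != c -> b != d -> c != d ->
  a \in L -> b \in L -> c \in L -> d \in L -> move B a b = move B c d.
Proof.
move=> LB ab ac ad bc bd cd aL bL cL dL.
have ca : c != a by rewrite eq_sym.
have da : d != a by rewrite eq_sym.
have cb : c != b by rewrite eq_sym.
have db : d != b by rewrite eq_sym.
have dc : d != c by rewrite eq_sym.
have ba : b != a by rewrite eq_sym.
apply/permP => z.
case: (boolP (z \in L)) => zL.
  case: (eqVneq z a) => [-> | za].
    by rewrite move_a // (move_eq_line (t := b) (L := L) cd LB cL dL aL).
  case: (eqVneq z b) => [-> | zb].
    by rewrite move_b // (move_eq_line (t := a) (L := L) cd LB cL dL bL).
  case: (eqVneq z c) => [-> | zc].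
    by rewrite move_a // (move_eq_line (t := d) (L := L) ab LB aL bL cL).
  have -> : z = d by apply: (fourth_uniq LB ab ac bc aL bL cL).
  by rewrite move_b // (move_eq_line (t := c) (L := L) ab LB aL bL dL).
case: (boolP (col a b z)) => cab.
  by rewrite (move_line_half LB ab ac ad bc bd cd).
case: (boolP (col c d z)) => ccd.
  by rewrite (move_line_half LB cd ca cb da db ab).
have za : z != a by apply: contraNneq zL => ->.
have zb : z != b by apply: contraNneq zL => ->.
have zc : z != c by apply: contraNneq zL => ->.
have zd : z != d by apply: contraNneq zL => ->.
by rewrite !move_fix.
Qed.

Lemma move_rep (a b z : T) : a != b -> move B a b z != z ->
  move B z (move B a b z) = move B a b.
Proof.
move=> ab mz.
case: (eqVneq z a) => [-> | za]; first by rewrite move_a.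
case: (eqVneq z b) => [-> | zb]; first by rewrite move_b // moveC.
have /colP [L LB /and3P [aL bL zL]] := moved_col mz za zb.
have [wL wa wb wz] := move_line ab LB aL bL zL za zb.
symmetry; apply: (move_line_eq LB) => //; by rewrite eq_sym.
Qed.


Lemma colE (p q r : T) : p != q -> p != r -> q != r ->
  ([set p; q; r] \in collinear_triples B) = col p q r.
Proof.
move=> pq pr qr; rewrite /collinear_triples inE card3 // eqxx /=.
apply: eq_has => L /=; by rewrite !subUset !sub1set andbA.
Qed.

Lemma card4 (p q r s : T) : p != q -> p != r -> p != s -> q != r -> q != s -> r != s ->
  #|[set p; q; r; s]| = 4.
Proof.
move=> pq pr ps qr qs rs.
by rewrite -!setUA !cardsU1 cards1 !inE (negPf pq) (negPf pr) (negPf ps) (negPf qr) (negPf qs) (negPf rs).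
Qed.

Lemma sub3 (X : {set T}) (p q r s : T) : X \subset [set p; q; r; s] -> #|X| = 3 ->
  p \notin X -> q != r -> q != s -> r != s -> X = [set q; r; s].
Proof.
move=> XF X3 pX qr qs rs; apply/eqP; rewrite eqEcard card3 // X3 leqnn andbT.
apply/subsetP => t tX; have := subsetP XF t tX; rewrite !inE.
have tp : (t == p) = false by apply: contraNF pX => /eqP <-.
by rewrite tp.
Qed.

Lemma parity (p q r s : T) : p != q -> p != r -> p != s -> q != r -> q != s -> r != s ->
  ~~ odd (col p q r + col p q s + col p r s + col q r s).
Proof.
move=> pq pr ps qr qs rs.
have qp : q != p by rewrite eq_sym.
have rp : r != p by rewrite eq_sym.
have sp : s != p by rewrite eq_sym.
have rq : r != q by rewrite eq_sym.
have sq : s != q by rewrite eq_sym.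
have sr : s != r by rewrite eq_sym.
have [_ [_ H]] := Hrtg.
have := H _ (card4 pq pr ps qr qs rs).
set C := collinear_triples B.
set l := [:: [set p; q; r]; [set p; q; s]; [set p; r; s]; [set q; r; s]].
have ul : uniq l.
  rewrite /l /= !inE !andbT.
  have ne : forall (X Y : {set T}) (t : T), t \in Y -> t \notin X -> (X == Y) = false.
    by move=> X Y t tY tX; apply: contraNF tX => /eqP ->.
  have nin : forall (x y z t : T), t != x -> t != y -> t != z -> t \notin [set x; y; z].
    by move=> x y z t tx ty tz; rewrite !inE (negPf tx) (negPf ty) (negPf tz).
  have inn1 : forall (x y z : T), x \in [set x; y; z] by move=> x y z; rewrite !inE eqxx.
  have inn2 : forall (x y z : T), y \in [set x; y; z] by move=> x y z; rewrite !inE eqxx orbT.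
  have inn3 : forall (x y z : T), z \in [set x; y; z] by move=> x y z; rewrite !inE eqxx orbT.
  rewrite (ne _ _ s (inn3 _ _ _) (nin _ _ _ _ sp sq sr)).
  rewrite (ne _ _ s (inn3 _ _ _) (nin _ _ _ _ sp sq sr)).
  rewrite (ne _ _ s (inn3 _ _ _) (nin _ _ _ _ sp sq sr)).
  rewrite (ne _ _ r (inn2 _ _ _) (nin _ _ _ _ rp rq rs)).
  rewrite (ne _ _ r (inn2 _ _ _) (nin _ _ _ _ rp rq rs)).
  by rewrite (ne _ _ q (inn1 _ _ _) (nin _ _ _ _ qp qr qs)).
have E : [set S in C | S \subset [set p; q; r; s]] =i [seq X <- l | X \in C].
  move=> X; rewrite inE mem_filter.
  case XC: (X \in C) => //=.
  have X3 : #|X| = 3 by have [H3 _] := Hrtg; apply: H3.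
  apply/idP/idP => [XF | Xl].
    case: (boolP (p \in X)) => pX; last by rewrite (sub3 XF X3 pX) // !inE eqxx ?orbT.
    case: (boolP (q \in X)) => qX.
      case: (boolP (r \in X)) => rX.
        case: (boolP (s \in X)) => sX.
          have : [set p; q; r; s] \subset X.
            by apply/subsetP => t; rewrite !inE => /orP [/orP [/orP []|]|] /eqP ->.
          by move/subset_leq_card; rewrite card4 // X3.
        have XF' : X \subset [set s; p; q; r].
          by apply: subset_trans XF _; apply/subsetP => t; rewrite !inE; case: (t == p); case: (t == q); case: (t == r); case: (t == s).
        by rewrite (sub3 XF' X3 sX) // !inE eqxx ?orbT.
      have XF' : X \subset [set r; p; q; s].
        by apply: subset_trans XF _; apply/subsetP => t; rewrite !inE; case: (t == p); case: (t == q); case: (t == r); case: (t == s).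
      by rewrite (sub3 XF' X3 rX) // !inE eqxx ?orbT.
    have XF' : X \subset [set q; p; r; s].
      by apply: subset_trans XF _; apply/subsetP => t; rewrite !inE; case: (t == p); case: (t == q); case: (t == r); case: (t == s).
    by rewrite (sub3 XF' X3 qX) // !inE eqxx ?orbT.
  move: Xl; rewrite !inE => /or4P [] /eqP ->; apply/subsetP => t; rewrite !inE;
    by case: (t == p); case: (t == q); case: (t == r); case: (t == s).
rewrite (eq_card E).
have /card_uniqP -> : uniq [seq X <- l | X \in C] by apply: filter_uniq.
rewrite size_filter /= !colE //.
by rewrite !addnA addn0; case: (col p q r); case: (col p q s); case: (col p r s); case: (col q r s).
Qed.


Lemma img_line (s : {perm T}) (K J : {set T}) : K \in B -> J \in B -> s @: K \subset J -> s @: K \in B.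
Proof. by move=> KB JB sub; apply: (sub_line JB) => //; rewrite card_imset ?B4 //; apply: perm_inj. Qed.

Lemma img4 (s : {perm T}) (K J : {set T}) (a x y z : T) :
  (forall t, t \in K -> [\/ t = a, t = x, t = y | t = z]) ->
  s a \in J -> s x \in J -> s y \in J -> s z \in J -> s @: K \subset J.
Proof.
move=> H ha hx hy hz; apply/subsetP => _ /imsetP [t tK ->].
by case: (H t tK) => ->.
Qed.

Lemma moved_data (a b x : T) : a != b -> x != a -> x != b -> move B a b x != x ->
  exists L, [/\ L \in B, a \in L, b \in L, x \in L &
     [/\ move B a b x \in L, move B a b x != a, move B a b x != b & move B a b x != x]].
Proof.
move=> ab xa xb mx.
have /colP [L LB /and3P [aL bL xL]] := moved_col mx xa xb.
by exists L; split => //; apply: move_line.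
Qed.

Lemma fixed_notin (a b t : T) L : a != b -> L \in B -> a \in L -> b \in L ->
  t != a -> t != b -> move B a b t = t -> t \notin L.
Proof.
move=> ab LB aL bL ta tb mt; apply/negP => tL.
have [_ _ _ ] := move_line ab LB aL bL tL ta tb.
by rewrite mt eqxx.
Qed.

Lemma fixed_ncol (a b t : T) : a != b -> t != a -> t != b -> move B a b t = t -> ~~ col a b t.
Proof.
move=> ab ta tb mt; apply/negP => /colP [L LB /and3P [aL bL tL]].
by move: tL; apply/negP; apply: (fixed_notin ab LB aL bL ta tb mt).
Qed.

Lemma aut_both (a b : T) K : a != b -> K \in B -> a \in K -> b \in K -> move B a b @: K \in B.
Proof.
move=> ab KB aK bK; apply: (img_line KB KB).
apply/subsetP => _ /imsetP [t tK ->].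
case: (eqVneq t a) => [-> | ta]; first by rewrite move_a.
case: (eqVneq t b) => [-> | tb]; first by rewrite move_b.
by have [] := move_line ab KB aK bK tK ta tb.
Qed.

Section AutA.
Variables (a b x y z : T) (K : {set T}).
Hypotheses (ab : a != b) (KB : K \in B) (aK : a \in K) (bK : b \notin K)
  (xK : x \in K) (yK : y \in K) (zK : z \in K)
  (ax : a != x) (ay : a != y) (az : a != z) (xy : x != y) (xz : x != z) (yz : y != z)
  (cov : forall t, t \in K -> [\/ t = a, t = x, t = y | t = z]).

Let s := move B a b.
Let xb : x != b. Proof. by apply: contraNneq bK => <-. Qed.
Let yb : y != b. Proof. by apply: contraNneq bK => <-. Qed.
Let zb : z != b. Proof. by apply: contraNneq bK => <-. Qed.
Let xa : x != a. Proof. by rewrite eq_sym. Qed.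
Let ya : y != a. Proof. by rewrite eq_sym. Qed.
Let za : z != a. Proof. by rewrite eq_sym. Qed.
Let yx : y != x. Proof. by rewrite eq_sym. Qed.
Let zx : z != x. Proof. by rewrite eq_sym. Qed.
Let zy : z != y. Proof. by rewrite eq_sym. Qed.

Lemma autA_k1 : s x != x -> s y = y -> s z = z -> s @: K \in B.
Proof.
move=> mx fy fz.
have [L [LB aL bL xL [x'L x'a x'b x'x]]] := moved_data ab xa xb mx.
have x'K : s x \notin K.
  apply/negP => x'K.
  have ax' : a != s x by rewrite eq_sym.
  have xx' : x != s x by rewrite eq_sym.
  have E := line3 KB LB ax ax' xx' aK xK x'K aL xL x'L.
  by move: bK; rewrite E bL.
have yL := fixed_notin ab LB aL bL ya yb fy.
have zL := fixed_notin ab LB aL bL za zb fz.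
have JB := tri_step KB LB ax aK xK aL xL yK yL.
apply: (img_line KB JB); apply: (img4 cov); rewrite /s ?move_a // -/s ?fy ?fz !inE.
- by rewrite bL (negPf bK).
- by rewrite x'L (negPf x'K).
- by rewrite yK (negPf yL).
- by rewrite zK (negPf zL).
Qed.


Lemma autA_k2 : s x != x -> s y != y -> s z = z -> False.
Proof.
move=> mx my fz.
have [L [LB aL bL xL [x'L x'a x'b x'x]]] := moved_data ab xa xb mx.
have yL : y \notin L.
  apply/negP => yL.
  have E := line3 KB LB ax ay xy aK xK yK aL xL yL.
  by move: bK; rewrite E bL.
have zL := fixed_notin ab LB aL bL za zb fz.
have JB := tri_step KB LB ax aK xK aL xL zK zL.
have cbyz : col b y z.
  apply/colP; exists ((K :\: L) :|: (L :\: K)) => //.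
  by rewrite !inE bL (negPf bK) yK (negPf yL) zK (negPf zL) !orbT.
have caby : col a b y := moved_col my ya yb.
have ncabz := fixed_ncol ab za zb fz.
have cayz : col a y z by apply/colP; exists K => //; rewrite aK yK zK.
have by_ : b != y by rewrite eq_sym.
have bz : b != z by rewrite eq_sym.
have := parity ab ay az by_ bz yz.
by rewrite caby (negPf ncabz) cayz cbyz.
Qed.


Lemma autA_k0 : s x = x -> s y = y -> s z = z -> s @: K \in B.
Proof.
move=> fx fy fz.
have bx : b != x by rewrite eq_sym.
have by_ : b != y by rewrite eq_sym.
have cbxy : col b x y.
  have := parity ab ax ay bx by_ xy.
  rewrite (negPf (fixed_ncol ab xa xb fx)) (negPf (fixed_ncol ab ya yb fy)).
  have -> : col a x y by apply/colP; exists K => //; rewrite aK xK yK.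
  by case: (col b x y).
have /colP [J JB /and3P [bJ xJ yJ]] := cbxy.
have aJ : a \notin J.
  apply/negP => aJ.
  have E := line3 KB JB ax ay xy aK xK yK aJ xJ yJ.
  by move: bK; rewrite E bJ.
case: (boolP (z \in J)) => zJ.
  apply: (img_line KB JB); apply: (img4 cov); by rewrite /s ?move_a // -/s ?fx ?fy ?fz.
have J'B := tri_step JB KB xy xJ yJ xK yK bJ bK.
have : col a b z.
  apply/colP; exists ((J :\: K) :|: (K :\: J)) => //.
  by rewrite !inE bJ (negPf bK) aK (negPf aJ) zK (negPf zJ) !orbT.
by rewrite (negPf (fixed_ncol ab za zb fz)).
Qed.


Lemma autA_k3 : s x != x -> s y != y -> s z != z -> s @: K \in B.
Proof.
move=> mx my mz.
have [Lx [LxB aLx bLx xLx [x'L x'a x'b x'x]]] := moved_data ab xa xb mx.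
have [Ly [LyB aLy bLy yLy [y'L y'a y'b y'y]]] := moved_data ab ya yb my.
have [Lz [LzB aLz bLz zLz [z'L z'a z'b z'z]]] := moved_data ab za zb mz.
rewrite -/s in x'L x'a x'b x'x y'L y'a y'b y'y z'L z'a z'b z'z.
have notL : forall (u v : T) L, L \in B -> a \in L -> b \in L -> u \in L -> v \in K -> v \in L ->
    a != u -> a != v -> u != v -> u \in K -> False.
  move=> u v L LB aL bL uL vK vL au av uv uK.
  have E := line3 KB LB au av uv aK uK vK aL uL vL.
  by move: bK; rewrite E bL.
have yLx : y \notin Lx by apply/negP => h; apply: (notL x y Lx).
have zLx : z \notin Lx by apply/negP => h; apply: (notL x z Lx).
have xLy : x \notin Ly by apply/negP => h; apply: (notL y x Ly).
have zLy : z \notin Ly by apply/negP => h; apply: (notL y z Ly).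
have xLz : x \notin Lz by apply/negP => h; apply: (notL z x Lz).
have yLz : y \notin Lz by apply/negP => h; apply: (notL z y Lz).
have x'K : s x \notin K by apply/negP => h; apply: (notL x (s x) Lx) => //; rewrite eq_sym.
have y'K : s y \notin K by apply/negP => h; apply: (notL y (s y) Ly) => //; rewrite eq_sym.
have z'K : s z \notin K by apply/negP => h; apply: (notL z (s z) Lz) => //; rewrite eq_sym.
have notL2 : forall (u : T) L L', L \in B -> L' \in B -> a \in L -> b \in L -> a \in L' -> b \in L' ->
    u \in L -> u \in L' -> u != a -> u != b -> L = L'.
  move=> u L L' LB L'B aL bL aL' bL' uL uL' ua ub.
  have au : a != u by rewrite eq_sym.
  have bu : b != u by rewrite eq_sym.
  exact: (line3 LB L'B ab au bu aL bL uL aL' bL' uL').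
have x'Ly : s x \notin Ly.
  by apply/negP => h; move: xLy; rewrite -(notL2 (s x) Lx Ly) // xLx.
have x'Lz : s x \notin Lz.
  by apply/negP => h; move: xLz; rewrite -(notL2 (s x) Lx Lz) // xLx.
have y'Lx : s y \notin Lx.
  by apply/negP => h; move: yLx; rewrite -(notL2 (s y) Ly Lx) // yLy.
have y'Lz : s y \notin Lz.
  by apply/negP => h; move: yLz; rewrite -(notL2 (s y) Ly Lz) // yLy.
have z'Lx : s z \notin Lx.
  by apply/negP => h; move: zLx; rewrite -(notL2 (s z) Lz Lx) // zLz.
have z'Ly : s z \notin Ly.
  by apply/negP => h; move: zLy; rewrite -(notL2 (s z) Lz Ly) // zLz.
have J1B := tri_step KB LxB ax aK xK aLx xLx yK yLx.
set J1 := (K :\: Lx) :|: (Lx :\: K) in J1B.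
have bJ1 : b \in J1 by rewrite in_setU !in_setD bLx (negPf bK) orbT.
have yJ1 : y \in J1 by rewrite in_setU !in_setD yK (negPf yLx).
have zJ1 : z \in J1 by rewrite in_setU !in_setD zK (negPf zLx).
have x'J1 : s x \in J1 by rewrite in_setU !in_setD x'L (negPf x'K) orbT.
have aJ1 : a \notin J1 by rewrite in_setU !in_setD aK aLx.
have y'J1 : s y \notin J1 by rewrite in_setU !in_setD (negPf y'K) (negPf y'Lx).
have z'J1 : s z \notin J1 by rewrite in_setU !in_setD (negPf z'K) (negPf z'Lx).
have byv : b != y by rewrite eq_sym.
have J2B := tri_step J1B LyB byv bJ1 yJ1 bLy yLy zJ1 zLy.
set J2 := (J1 :\: Ly) :|: (Ly :\: J1) in J2B.
have x'J2 : s x \in J2 by rewrite in_setU !in_setD x'J1 (negPf x'Ly).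
have zJ2 : z \in J2 by rewrite in_setU !in_setD zJ1 (negPf zLy).
have aJ2 : a \in J2 by rewrite in_setU !in_setD aLy (negPf aJ1) orbT.
have y'J2 : s y \in J2 by rewrite in_setU !in_setD y'L (negPf y'J1) orbT.
have bJ2 : b \notin J2 by rewrite in_setU !in_setD bJ1 bLy.
have z'J2 : s z \notin J2 by rewrite in_setU !in_setD (negPf z'J1) (negPf z'Ly).
have J3B := tri_step J2B LzB az aJ2 zJ2 aLz zLz x'J2 x'Lz.
apply: (img_line KB J3B); apply: (img4 cov); rewrite /s ?move_a // -/s.
- by rewrite in_setU !in_setD bLz (negPf bJ2) orbT.
- by rewrite in_setU !in_setD x'J2 (negPf x'Lz).
- by rewrite in_setU !in_setD y'J2 (negPf y'Lz).
- by rewrite in_setU !in_setD z'L (negPf z'J2) orbT.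
Qed.

End AutA.


Lemma aut_a (a b : T) K : a != b -> K \in B -> a \in K -> b \notin K -> move B a b @: K \in B.
Proof.
move=> ab KB aK bK.
have [x xK /and3P [xa _ _]] := avoid3 a a a KB.
have [y yK /and3P [ya yx _]] := avoid3 a x x KB.
have [z zK /and3P [za zx zy]] := avoid3 a x y KB.
have ax : a != x by rewrite eq_sym.
have ay : a != y by rewrite eq_sym.
have az : a != z by rewrite eq_sym.
have xy : x != y by rewrite eq_sym.
have xz : x != z by rewrite eq_sym.
have yz : y != z by rewrite eq_sym.
have c1 : forall t, t \in K -> [\/ t = a, t = x, t = y | t = z].
  move=> t tK.
  case: (eqVneq t a) => [-> | ta]; first by apply: Or41.
  case: (eqVneq t x) => [-> | tx]; first by apply: Or42.
  case: (eqVneq t y) => [-> | ty]; first by apply: Or43.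
  by apply: Or44; apply: (fourth_uniq KB ax ay xy aK xK yK).
have c2 : forall t, t \in K -> [\/ t = a, t = z, t = x | t = y].
  by move=> t /c1 [] ->; [apply: Or41|apply: Or43|apply: Or44|apply: Or42].
have c3 : forall t, t \in K -> [\/ t = a, t = y, t = x | t = z].
  by move=> t /c1 [] ->; [apply: Or41|apply: Or43|apply: Or42|apply: Or44].
have c4 : forall t, t \in K -> [\/ t = a, t = y, t = z | t = x].
  by move=> t /c1 [] ->; [apply: Or41|apply: Or44|apply: Or42|apply: Or43].
have c5 : forall t, t \in K -> [\/ t = a, t = x, t = z | t = y].
  by move=> t /c1 [] ->; [apply: Or41|apply: Or42|apply: Or44|apply: Or43].
case: (eqVneq (move B a b x) x) => fx; case: (eqVneq (move B a b y) y) => fy;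
  case: (eqVneq (move B a b z) z) => fz.
- by apply: (autA_k0 (a:=a) (b:=b) (x:=x) (y:=y) (z:=z) (K:=K)).
- by apply: (autA_k1 (a:=a) (b:=b) (x:=z) (y:=x) (z:=y) (K:=K)); rewrite // eq_sym.
- by apply: (autA_k1 (a:=a) (b:=b) (x:=y) (y:=x) (z:=z) (K:=K)); rewrite // eq_sym.
- by case: (autA_k2 (a:=a) (b:=b) (x:=y) (y:=z) (z:=x) (K:=K)); rewrite // eq_sym.
- by apply: (autA_k1 (a:=a) (b:=b) (x:=x) (y:=y) (z:=z) (K:=K)).
- by case: (autA_k2 (a:=a) (b:=b) (x:=x) (y:=z) (z:=y) (K:=K)); rewrite // eq_sym.
- by case: (autA_k2 (a:=a) (b:=b) (x:=x) (y:=y) (z:=z) (K:=K)).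
- by apply: (autA_k3 (a:=a) (b:=b) (x:=x) (y:=y) (z:=z) (K:=K)).
Qed.


Lemma aut_witha (a b : T) K : a != b -> K \in B -> a \in K -> move B a b @: K \in B.
Proof.
move=> ab KB aK; case: (boolP (b \in K)) => bK; first exact: aut_both.
exact: aut_a.
Qed.

Lemma memI (s : {perm T}) (A : {set T}) (t : T) : (s t \in s @: A) = (t \in A).
Proof. by apply: mem_imset; apply: perm_inj. Qed.

Lemma aut_pair (a b u v : T) K : a != b -> K \in B -> a \notin K -> u \in K -> v \in K -> u != v ->
  col a u v -> move B a b @: K \in B.
Proof.
move=> ab KB aK uK vK uv /colP [J JB /and3P [aJ uJ vJ]].
set s := move B a b.
have [j jJ /and3P [ja ju jv]] := avoid3 a u v JB.
have jK : j \notin K.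
  apply/negP => jK.
  have uj : u != j by rewrite eq_sym.
  have vj : v != j by rewrite eq_sym.
  have E := line3 JB KB uv uj vj uJ vJ jJ uK vK jK.
  by move: aK; rewrite -E aJ.
have MB := tri_step JB KB uv uJ vJ uK vK aJ aK.
set M := (J :\: K) :|: (K :\: J) in MB.
have aM : a \in M by rewrite in_setU !in_setD aK aJ.
have jM : j \in M by rewrite in_setU !in_setD jK jJ.
have uM : u \notin M by rewrite in_setU !in_setD uK uJ.
have sJB : s @: J \in B := aut_witha ab JB aJ.
have sMB : s @: M \in B := aut_witha ab MB aM.
have saj : s a != s j by rewrite (inj_eq perm_inj) eq_sym.
have J2B := tri_step sJB sMB saj (imset_f _ aJ) (imset_f _ jJ) (imset_f _ aM) (imset_f _ jM)
   (imset_f _ uJ) (negbT (etrans (memI s M u) (negbTE uM))).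
apply: (img_line KB J2B).
apply/subsetP => _ /imsetP [t tK ->].
rewrite in_setU !in_setD !memI.
case: (boolP (t \in J)) => tJ /=.
  have -> : (t \in M) = false by rewrite in_setU !in_setD tK tJ.
  done.
have -> : (t \in M) = true by rewrite in_setU !in_setD tK tJ orbT.
done.
Qed.

Lemma aut_none (a b : T) K : a != b -> K \in B -> a \notin K -> move B a b @: K \in B.
Proof.
move=> ab KB aK.
have [x xK _] := avoid3 a a a KB.
have [y yK /and3P [yx _ _]] := avoid3 x x x KB.
have [z zK /and3P [zx zy _]] := avoid3 x y y KB.
have ax : a != x by apply: contraNneq aK => ->.
have ay : a != y by apply: contraNneq aK => ->.
have az : a != z by apply: contraNneq aK => ->.
have xy : x != y by rewrite eq_sym.
have xz : x != z by rewrite eq_sym.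
have yz : y != z by rewrite eq_sym.
have := parity ax ay az xy xz yz.
have -> : col x y z by apply/colP; exists K => //; rewrite xK yK zK.
case: (boolP (col a x y)) => cxy; first by move=> _; exact: (aut_pair ab KB aK xK yK xy cxy).
case: (boolP (col a x z)) => cxz; first by move=> _; exact: (aut_pair ab KB aK xK zK xz cxz).
case: (boolP (col a y z)) => cyz; first by move=> _; exact: (aut_pair ab KB aK yK zK yz cyz).
done.
Qed.

Lemma aut_move (a b : T) K : a != b -> K \in B -> move B a b @: K \in B.
Proof.
move=> ab KB.
case: (boolP (a \in K)) => aK; first exact: aut_witha.
case: (boolP (b \in K)) => bK; last exact: aut_none.
by rewrite moveC; apply: aut_witha => //; rewrite eq_sym.
Qed.


Definition linepres (g : {perm T}) := forall K, K \in B -> g @: K \in B.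

Lemma natural (g : {perm T}) (x y : T) : linepres g -> linepres g^-1 ->
  (move B x y) ^ g = move B (g x) (g y).
Proof.
move=> Hg Hgi.
case: (eqVneq x y) => [-> | xy]; first by rewrite /move !eqxx conj1g.
have gxy : g x != g y by rewrite (inj_eq perm_inj).
apply/permP => u; rewrite conjgE !permM.
have -> : u = g (g^-1 u) by rewrite permKV.
rewrite permK.
set v := g^-1 u.
case: (eqVneq v x) => [-> | vx]; first by rewrite !move_a.
case: (eqVneq v y) => [-> | vy]; first by rewrite !move_b.
have gvx : g v != g x by rewrite (inj_eq perm_inj).
have gvy : g v != g y by rewrite (inj_eq perm_inj).
case: (boolP (col x y v)) => [/colP [L LB /and3P [xL yL vL]] | nc].
  have [wL wx wy wv] := move_line xy LB xL yL vL vx vy.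
  symmetry; apply: (move_eq_line (L := g @: L)) => //; rewrite ?memI ?(inj_eq perm_inj) //.
  exact: Hg.
rewrite move_fix // move_fix //.
apply/negP => /colP [L LB /and3P [xL yL vL]].
move/negP: nc; apply; apply/colP; exists (g^-1 @: L); first exact: Hgi.
by rewrite -{1}(permK g x) -{1}(permK g y) -{1}(permK g v) !memI xL yL vL.
Qed.

Lemma linepres_move (a b : T) : linepres (move B a b).
Proof.
move=> K KB; case: (eqVneq a b) => [-> | ab]; last exact: aut_move.
by rewrite /move eqxx; have -> : (1 : {perm T}) @: K = K by apply/setP => t; rewrite -{1}(perm1 t) memI.
Qed.

Lemma move_invg (a b : T) : (move B a b)^-1 = move B a b.
Proof. by apply: (mulgI (move B a b)); rewrite mulgV move_sq. Qed.


Lemma colC1 (a b z : T) : col a b z = col b a z.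
Proof. by apply: eq_has => L; rewrite /= !andbA (andbC (a \in L)). Qed.

Lemma colC2 (a b z : T) : col a b z = col a z b.
Proof. by apply: eq_has => L; rewrite /= (andbC (b \in L)). Qed.

Lemma move_conj_self (a b c d : T) : (move B a b) ^ (move B c d) = move B c d * move B a b * move B c d.
Proof. by rewrite conjgE move_invg mulgA. Qed.

Lemma ord12 (gT : finGroupType) (g : gT) : (g ^+ 2 = 1)%g -> #[g] \in [:: 1%N; 2%N; 3%N].
Proof.
move=> h; have : #[g] %| 2 by rewrite order_dvdn h eqxx.
have := order_gt0 g.
case: #[g] => [|[|[|n]]] //.
Qed.

Lemma ord13 (gT : finGroupType) (g : gT) : (g ^+ 3 = 1)%g -> #[g] \in [:: 1%N; 2%N; 3%N].
Proof.
move=> h; have : #[g] %| 3 by rewrite order_dvdn h eqxx.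
have := order_gt0 g.
case: #[g] => [|[|[|[|n]]]] //.
Qed.

Lemma commute_sq (gT : finGroupType) (e f : gT) : e * e = 1 -> f * f = 1 -> e * f = f * e ->
  (e * f) ^+ 2 = 1.
Proof.
move=> ee ff ef.
by rewrite expgS expg1 -mulgA (mulgA f) -ef -mulgA ff mulg1 ee.
Qed.

Lemma braid_cube (gT : finGroupType) (e f : gT) : e * e = 1 -> f * f = 1 -> e * f * e = f * e * f ->
  (e * f) ^+ 3 = 1.
Proof.
move=> ee ff br.
rewrite expgS expgS expg1.
have -> : e * f * (e * f * (e * f)) = (e * f * e) * (f * e * f) by rewrite !mulgA.
rewrite -br.
have -> : e * f * e * (e * f * e) = e * f * (e * e) * f * e by rewrite !mulgA.
by rewrite ee mulg1 -(mulgA e f f) ff mulg1 ee.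
Qed.

Lemma move_orders_shared (z q r : T) : z != q -> z != r -> q != r ->
  #[move B z q * move B z r] \in [:: 1%N; 2%N; 3%N].
Proof.
move=> zq zr qr.
have qz : q != z by rewrite eq_sym.
have rz : r != z by rewrite eq_sym.
have rq : r != q by rewrite eq_sym.
have ee := move_sq z q; have ff := move_sq z r.
have natf : (move B z r) ^ (move B z q) = move B q (move B z q r).
  by rewrite natural ?move_a //; [apply: linepres_move | rewrite move_invg; apply: linepres_move].
have nate : (move B z q) ^ (move B z r) = move B r (move B z r q).
  by rewrite natural ?move_a //; [apply: linepres_move | rewrite move_invg; apply: linepres_move].
rewrite !move_conj_self in natf nate.
case: (boolP (col z q r)) => [/colP [L LB /and3P [zL qL rL]] | nc].
  apply: ord12; apply: commute_sq => //.
  have [wL wz wq wr] := move_line zq LB zL qL rL rz rq.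
  have E : move B q (move B z q r) = move B z r.
    apply: (move_line_eq LB) => //; by rewrite eq_sym.
  rewrite E in natf.
  by rewrite -{2}natf -!mulgA ee mulg1.
apply: ord13; apply: braid_cube => //.
have e1 : move B z q r = r by rewrite move_fix.
have e2 : move B z r q = q by rewrite move_fix // -colC2.
rewrite e1 in natf; rewrite e2 in nate.
by rewrite natf moveC -nate.
Qed.

Lemma move_orders (a b c d : T) : a != b -> c != d ->
  #[move B a b * move B c d] \in [:: 1%N; 2%N; 3%N].
Proof.
move=> ab cd.
case: (boolP [exists z, (move B a b z != z) && (move B c d z != z)]) => [/existsP [z /andP [ez fz]] | /existsPn H].
  rewrite -(move_rep ab ez) -(move_rep cd fz).
  have zq : z != move B a b z by rewrite eq_sym.
  have zr : z != move B c d z by rewrite eq_sym.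
  case: (eqVneq (move B a b z) (move B c d z)) => [qr | qr].
    by apply: ord12; rewrite expgS expg1 qr !move_sq mulg1.
  exact: move_orders_shared.
apply: ord12; apply: commute_sq; rewrite ?move_sq //.
apply/permP => t; rewrite !permM.
have Hc : forall u, move B a b u != u -> move B c d u = u.
  by move=> u hu; have := H u; rewrite hu /= => /negPn /eqP.
have Hd : forall u, move B c d u != u -> move B a b u = u.
  by move=> u hu; have := H u; rewrite hu andbT => /negPn /eqP.
case: (eqVneq (move B a b t) t) => [et | et].
  rewrite et.
  case: (eqVneq (move B c d t) t) => [ft | ft]; first by rewrite ft et.
  symmetry; apply: Hd; rewrite move_invol; by rewrite eq_sym.
rewrite (Hc t et); apply: Hc; rewrite move_invol; by rewrite eq_sym.
Qed.


Lemma move_path_cat (a : T) (s t : seq T) :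
  move_path B a (s ++ t) = move_path B a s * move_path B (last a s) t.
Proof.
elim: s a => [|c s IH] a /=; first by rewrite mul1g.
by rewrite IH mulgA.
Qed.

Lemma path_move (c x y : T) : x != y -> exists t, move_path B c t = move B x y.
Proof.
move=> xy.
case: (eqVneq c x) => [-> | cx]; first by exists [:: y]; rewrite /= mulg1.
case: (eqVneq c y) => [-> | cy]; first by exists [:: x]; rewrite /= mulg1 moveC.
case: (boolP (col x y c)) => [/colP [L LB /and3P [xL yL cL]] | nc].
  have [wL wx wy wc] := move_line xy LB xL yL cL cx cy.
  exists [:: move B x y c]; rewrite /= mulg1.
  symmetry; apply: (move_line_eq LB) => //; by rewrite eq_sym.
exists [:: x; y; c]; rewrite /= mulg1.
have xc : x != c by rewrite eq_sym.
have yc : y != c by rewrite eq_sym.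
have ncc : ~~ col c x y by rewrite colC1 colC2.
have yx : y != x by rewrite eq_sym.
have ncy : ~~ col c y x by rewrite colC2.
have h1 : (move B x y) ^ (move B c x) = move B c y.
  rewrite natural; [|apply: linepres_move | rewrite move_invg; apply: linepres_move].
  by rewrite move_b // move_fix.
have h2 : (move B c x) ^ (move B c y) = move B y x.
  rewrite natural; [|apply: linepres_move | rewrite move_invg; apply: linepres_move].
  by rewrite move_a // move_fix.
rewrite move_conj_self in h1; rewrite move_conj_self in h2.
have h3 : move B c x * move B x y = move B c y * move B c x.
  by rewrite -h1 -!mulgA move_sq mulg1.
by rewrite mulgA h3 (moveC y c) h2 moveC.
Qed.

Lemma Linf_mul (inf : T) (g : {perm T}) (a b : T) : in_Linf B inf g -> a != b ->
  in_Linf B inf (g * move B a b).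
Proof.
move=> [s [sn ->]] ab.
have [t Et] := path_move (last inf s) ab.
exists (s ++ t); split; first by move: sn; case: (s).
by rewrite move_path_cat Et.
Qed.

Lemma moves_setP (e : {perm T}) : reflect (exists a b, a != b /\ e = move B a b) (e \in moves_set B).
Proof.
apply: (iffP imsetP) => [[[a b] /= ab ->] | [a [b [ab ->]]]].
  by exists a, b; move: ab; rewrite inE.
by exists (a, b) => //; rewrite inE.
Qed.


Lemma main (inf : T) :
  exists G : {group {perm T}},
    (forall g : {perm T}, g \in G <-> in_Linf B inf g) /\
    (forall g : {perm T}, g \in G -> is_aut B g) /\
    three_transposition_group G (moves_set B).
Proof.
set E := moves_set B.
pose autset := [set g : {perm T} | all (fun K : {set T} => g @: K \in B) B].
have gsA : group_set autset.
  apply/group_setP; split.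
    rewrite inE; apply/allP => K KB.
    by have -> : (1 : {perm T}) @: K = K by apply/setP => t; rewrite -{1}(perm1 t) memI.
  move=> g h; rewrite !inE => /allP Hg /allP Hh; apply/allP => K KB.
  have -> : (g * h) @: K = h @: (g @: K).
    by rewrite -imset_comp; apply: eq_imset => t /=; rewrite permM.
  by apply: Hh; apply: Hg.
have EA : E \subset Group gsA.
  apply/subsetP => e /moves_setP [a [b [ab ->]]].
  by rewrite inE; apply/allP => K KB; apply: linepres_move.
have GA : <<E>> \subset Group gsA by rewrite gen_subG.
pose cset := [set g : {perm T} | [forall e in E, e ^ g \in E]].
have gsC : group_set cset.
  apply/group_setP; split.
    by rewrite inE; apply/forall_inP => e eE; rewrite conjg1.
  move=> g h; rewrite !inE => /forall_inP Hg /forall_inP Hh; apply/forall_inP => e eE.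
  by rewrite conjgM; apply: Hh; apply: Hg.
have EC : E \subset Group gsC.
  apply/subsetP => g /moves_setP [c [d [cd ->]]].
  rewrite inE; apply/forall_inP => e /moves_setP [a [b [ab ->]]].
  rewrite natural; [|apply: linepres_move | rewrite move_invg; apply: linepres_move].
  by apply/moves_setP; exists (move B c d a), (move B c d b); split => //; rewrite (inj_eq perm_inj).
have GC : <<E>> \subset Group gsC by rewrite gen_subG.
exists <<E>>%G; split; last split.
- move=> g; split => [Hg | [s [sn ->]]].
    have [n [c cE ->]] := gen_prodgP Hg.
    elim: n c cE => [|n IH] c cE.
      by rewrite big_ord0; exists [:: inf]; split => //=; rewrite /move eqxx mulg1.
    rewrite big_ord_recr /=.
    have [a [b [ab ->]]] := moves_setP _ (cE ord_max).
    by apply: Linf_mul => //; apply: IH.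
  elim: s inf sn => [|c s IH] a //= _.
  apply: groupM.
    case: (eqVneq a c) => [-> | ac]; first by rewrite /move eqxx group1.
    by apply: mem_gen; apply/moves_setP; exists a, c.
  case: s IH => [|d s] IH; first by rewrite group1.
  exact: IH.
- move=> g /(subsetP GA); rewrite inE => /allP Hg.
  have ui : uniq [seq g @: L | L : {set T} <- B].
    rewrite map_inj_uniq ?Buniq // => X Y EXY; apply/setP => t.
    by rewrite -(memI g X) EXY memI.
  have sub : {subset [seq g @: L | L : {set T} <- B] <= B}.
    by move=> _ /mapP [L LB ->]; apply: Hg.
  have [_ eqi] := uniq_min_size ui sub (eq_leq (esym (size_map _ _))).
  exact: uniq_perm ui Buniq eqi.
- split; last split; last split.
  + move=> e /moves_setP [a [b [ab ->]]].
    have : #[move B a b] %| 2 by rewrite order_dvdn expgS expg1 move_sq eqxx.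
    have : move B a b != 1.
      apply/eqP => E1; have := move_a ab; rewrite E1 perm1 => h; by move: ab; rewrite h eqxx.
    rewrite -order_eq1; have := order_gt0 (move B a b).
    by case: #[_] => [|[|[|n]]].
  + by [].
  + move=> e g eE /(subsetP GC); rewrite inE => /forall_inP; apply.
    exact: eE.
  + move=> e f /moves_setP [a [b [ab ->]]] /moves_setP [c [d [cd ->]]].
    exact: move_orders.
Qed.

End Basics.
Theorem theorem4p2 (T : finType) (B : seq {set T}) (lam : nat) (inf : T) :
  is_2design_4 B lam ->
  supersimple B ->
  prop_triangle B ->
  regular_two_graph (collinear_triples B) ->
  exists G : {group {perm T}},
    (forall g : {perm T}, g \in G <-> in_Linf B inf g) /\
    (forall g : {perm T}, g \in G -> is_aut B g) /\
    three_transposition_group G (moves_set B).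
Proof.
move=> [B4 _] Bss Btri Hrtg.
exact: (main B4 Bss Btri Hrtg inf).
Qed.
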